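(* Let $(S,V)$ be a complete semiring-semimodule pair, let $S'\subseteq S$ contain $0$ and $1$, and let $\mathcal P=(n,\Gamma,I,M,P,p_0,l)$ be an $S'$-$\omega$-pushdown automaton over $(S,V)$. Then $\big(\|\mathcal P\|,\ (((M^* )_{p,\epsilon})_{p\in\Gamma},((M^{\omega,l})_p)_{p\in\Gamma})\big)$ is a solution of the $S'^{n\times n}$-algebraic system $$y_0=I\,y_{p_0}\,P,\qquad y_p=\sum_{\pi\in\Gamma^*}M_{p,\pi}\,y_\pi,\quad p\in\Gamma,$$ over the complete semiring-semimodule pair $(S^{n\times n},V^n)$. Explicitly, with $x_p=(M^* )_{p,\epsilon}$ and $z_p=(M^{\omega,l})_p$: for all $p\in\Gamma$, $x_p=\sum_{\pi\in\Gamma^*}M_{p,\pi}x_\pi$ and $z_p=\sum_{\pi=p_1\dots p_k\in\Gamma^+}M_{p,\pi}\sum_{1\le j\le k}x_{p_1}\cdots x_{p_{j-1}}z_{p_j}$ (where $x_{p_1\dots p_k}=x_{p_1}\cdots x_{p_k}$, $x_\epsilon=E$), and $\|\mathcal P\|=(I x_{p_0}P,\ I z_{p_0})$.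
   Context: A complete semiring-semimodule pair $(S,V)$ (in the sense of Ésik and Kuich, ''Modern Automata Theory'') consists of a complete starsemiring $S$ (arbitrary sums with infinite associativity/commutativity/distributivity laws, star $s^*=\sum_{j\ge0}s^j$) and a complete $S$-semimodule $V$, with infinite products $\prod_{j\ge1}s_j\in V$ of sequences in $S$ satisfying the axioms of that framework. The quemiring $S\times V$ (and likewise $S^{n\times n}\times V^n$) has componentwise sum and product $(s,u)(s',u')=(ss',u+su')$; in the system $y_p=(x_p,z_p)$, $y_{p_1\dots p_k}=y_{p_1}\cdots y_{p_k}$, $y_\epsilon=(E,0)$, matrices act componentwise, and $I(s,u)P=(IsP,Iu)$. A pushdown transition matrix $M\in (S'^{n\times n})^{\Gamma^*\times\Gamma^*}$ ($\Gamma^*\times\Gamma^*$ matrix with $n\times n$ blocks over $S'$) satisfies (i) for each $p\in\Gamma$ only finitely many blocks $M_{p,\pi}$ are nonzero, and (ii) $M_{\pi_1,\pi_2}=M_{p,\pi}$ if $\pi_1=p\pi'$, $\pi_2=\pi\pi'$ for some $p\in\Gamma$, $\pi,\pi'\in\Gamma^*$, and $0$ otherwise. An $S'$-$\omega$-pushdown automaton $\mathcal P=(n,\Gamma,I,M,P,p_0,l)$ consists of $n\ge1$ (states $1,\dots,n$), an alphabet $\Gamma$, a pushdown transition matrix $M\in(S'^{n\times n})^{\Gamma^*\times\Gamma^*}$, $I\in S'^{1\times n}$, $P\in S'^{n\times1}$, $p_0\in\Gamma$, and $l\in\{0,\dots,n\}$. $M^*=\sum_{m\ge0}M^m$ with blocks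 $(M^* )_{\pi,\pi'}$; with $P_l=\{(j_1,j_2,\dots)\in\{1,\dots,n\}^\omega\mid j_t\le l\text{ for infinitely many }t\}$, $M^{\omega,l}\in (V^n)^{\Gamma^*}$ is given by $((M^{\omega,l})_\pi)_i=\sum_{\pi_1,\pi_2,\ldots\in\Gamma^*}\sum_{(j_1,j_2,\ldots)\in P_l}(M_{\pi,\pi_1})_{i,j_1}(M_{\pi_1,\pi_2})_{j_1,j_2}\cdots$. The behavior is $\|\mathcal P\|=I(M^* )_{p_0,\epsilon}P+I(M^{\omega,l})_{p_0}$, i.e. the element $(I(M^* )_{p_0,\epsilon}P,\ I(M^{\omega,l})_{p_0})$ of the quemiring $S\times V$. *)

(* Defs.v *)
From HB Require Import structures.
From mathcomp Require Import all_boot all_order all_algebra.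
Set Implicit Arguments. Unset Strict Implicit. Unset Printing Implicit Defensive.
Import Order.TTheory GRing.Theory.
Local Open Scope ring_scope.

(* Axioms of a complete (commutative) monoid (T, +, 0, csum). Partitions of
   the index set I into blocks indexed by J are given by a map f : I -> J
   (block j = fibre of f over j). *)
Definition complete_monoid_axioms (T : nmodType)
    (cs : forall I : Type, (I -> T) -> T) : Prop :=
  [/\ (forall (I : Type) (a : I -> T), (I -> False) -> cs I a = 0),
      (forall (I : Type) (a : I -> T) (i0 : I), (forall i, i = i0) -> cs I a = a i0),
      (forall (I : Type) (a : I -> T) (j k : I), j <> k ->
          (forall i, i = j \/ i = k) -> cs I a = a j + a k)
    & (forall (I J : Type) (f : I -> J) (a : I -> T),
          cs I a = cs J (fun j => cs {i : I | f i = j} (fun i => a (proj1_sig i))))].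

Definition complete_semiring_axioms (S : pzSemiRingType)
    (csS : forall I : Type, (I -> S) -> S) : Prop :=
  [/\ complete_monoid_axioms csS,
      (forall (I : Type) (a : I -> S) (c : S), csS I (fun i => c * a i) = c * csS I a)
    & (forall (I : Type) (a : I -> S) (c : S), csS I (fun i => a i * c) = csS I a * c)].

Definition complete_semimodule_axioms (S : pzSemiRingType) (V : lSemiModType S)
    (csS : forall I : Type, (I -> S) -> S)
    (csV : forall I : Type, (I -> V) -> V) : Prop :=
  [/\ complete_monoid_axioms csV,
      (forall (I : Type) (a : I -> S) (v : V), csS I a *: v = csV I (fun i => a i *: v))
    & (forall (I : Type) (v : I -> V) (s : S), s *: csV I v = csV I (fun i => s *: v i))].

(* Complete semiring-semimodule pair (S,V) with infinite product
   ip s = prod_{j>=1} s_j (sequences indexed from 0 here). *)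
Definition complete_pair_axioms (S : pzSemiRingType) (V : lSemiModType S)
    (csS : forall I : Type, (I -> S) -> S)
    (csV : forall I : Type, (I -> V) -> V)
    (ip : (nat -> S) -> V) : Prop :=
  [/\ complete_semiring_axioms csS,
      complete_semimodule_axioms csS csV,
      (forall s : nat -> S, ip s = s 0%N *: ip (fun j => s j.+1)),
      (forall (s : nat -> S) (k : nat -> nat), k 0%N = 0%N -> (forall j, (k j < k j.+1)%N) ->
          ip s = ip (fun j => \prod_(k j <= t < k j.+1) s t))
    & (forall (I : nat -> Type) (a : forall j, I j -> S),
          ip (fun j => csS (I j) (a j)) =
          csV (forall j, I j) (fun f => ip (fun j => a j (f j))))].

Section PDA.
Variables (S : pzSemiRingType) (V : lSemiModType S).
Variables (csS : forall I : Type, (I -> S) -> S) (csV : forall I : Type, (I -> V) -> V).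
Variable ip : (nat -> S) -> V.
Arguments csS : clear implicits.
Arguments csV : clear implicits.
Variables (n : nat) (Gamma : finType).

Definition msum (I : Type) (A : I -> 'M[S]_n) : 'M[S]_n :=
  \matrix_(i, j) csS I (fun k => A k i j).

Definition mact (A : 'M[S]_n) (v : 'I_n -> V) : 'I_n -> V :=
  fun i => \sum_(j < n) A i j *: v j.

Definition pushdown_matrix (M : seq Gamma -> seq Gamma -> 'M[S]_n) : Prop :=
  (forall p : Gamma, exists fin : seq (seq Gamma),
      forall pi : seq Gamma, M [:: p] pi <> 0 -> pi \in fin) /\
  (forall pi1 pi2 : seq Gamma,
      M pi1 pi2 = if pi1 is p :: pi' then
                    (if suffix pi' pi2 then M [:: p] (take (size pi2 - size pi') pi2)
                     else 0)
                  else 0).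

Definition is_omega_pda (S' : S -> Prop) (I : 'rV[S]_n)
    (M : seq Gamma -> seq Gamma -> 'M[S]_n) (P : 'cV[S]_n) (p0 : Gamma) (l : nat) : Prop :=
  [/\ (0 < n)%N, (l <= n)%N, pushdown_matrix M,
      (forall pi1 pi2 i j, S' (M pi1 pi2 i j))
    & (forall j, S' (I 0 j) /\ S' (P j 0))].

Variable M : seq Gamma -> seq Gamma -> 'M[S]_n.

Definition Mid (pi pi' : seq Gamma) : 'M[S]_n := if pi == pi' then 1%:M else 0.

Fixpoint Mpow (m : nat) : seq Gamma -> seq Gamma -> 'M[S]_n :=
  match m with
  | 0%N => Mid
  | m'.+1 => fun pi pi' => msum (fun pi'' : seq Gamma => Mpow m' pi pi'' *m M pi'' pi')
  end.

Definition Mstar (pi pi' : seq Gamma) : 'M[S]_n :=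
  msum (fun m : nat => Mpow m pi pi').

(* P_l : state sequences (j_1, j_2, ...) visiting states 1..l (i.e. 'I_n-indices < l)
   infinitely often; the sequence is indexed from 0 (js 0 = j_1). *)
Definition in_Pl (l : nat) (js : nat -> 'I_n) : Prop :=
  forall N : nat, exists2 t : nat, (N <= t)%N & (js t < l)%N.

(* (M^{omega,l})_pi, an element of V^n:
   ((M^{omega,l})_pi)_i = sum_{pi_1,pi_2,...} sum_{(j_1,j_2,...) in P_l}
        (M_{pi,pi_1})_{i,j_1} (M_{pi_1,pi_2})_{j_1,j_2} ... *)
Definition Momega (l : nat) (pi : seq Gamma) : 'I_n -> V :=
  fun i => csV (nat -> seq Gamma) (fun ps =>
           csV {js : nat -> 'I_n | in_Pl l js} (fun js =>
             ip (fun t => M (if t is t'.+1 then ps t' else pi) (ps t)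
                            (if t is t'.+1 then proj1_sig js t' else i)
                            (proj1_sig js t)))).

Definition behavior (I : 'rV[S]_n) (P : 'cV[S]_n) (p0 : Gamma) (l : nat) : S * V :=
  ((I *m Mstar [:: p0] [::] *m P) 0 0, \sum_(j < n) I 0 j *: Momega l [:: p0] j).

Definition xword (x : Gamma -> 'M[S]_n) (pi : seq Gamma) : 'M[S]_n :=
  foldr (fun p acc => x p *m acc) 1%:M pi.

End PDA.

(* Main.v *)
Require Import Defs.
From HB Require Import structures.
From mathcomp Require Import all_boot all_order all_algebra.
From Stdlib Require Import ClassicalEpsilon ProofIrrelevance FunctionalExtensionality.
Set Implicit Arguments. Unset Strict Implicit. Unset Printing Implicit Defensive.
Import GRing.Theory.
Local Open Scope ring_scope.

Section Generic.
Variables (T : nmodType) (cs : forall I : Type, (I -> T) -> T).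
Arguments cs : clear implicits.
Hypothesis Hc : complete_monoid_axioms cs.
Hypothesis Hz : forall I : Type, cs I (fun _ => 0) = 0.

Lemma cs_ext (I : Type) (a b : I -> T) : (forall i, a i = b i) -> cs I a = cs I b.
Proof. by move=> h; rewrite (functional_extensionality _ _ h). Qed.

Lemma cs_zero (I : Type) (a : I -> T) : (forall i, a i = 0) -> cs I a = 0.
Proof. by move=> h; rewrite (cs_ext h) Hz. Qed.

Lemma cs_part (I J : Type) (f : I -> J) (a : I -> T) :
  cs I a = cs J (fun j => cs {i : I | f i = j} (fun i => a (proj1_sig i))).
Proof. by case: Hc => _ _ _ h; apply: h. Qed.

Lemma cs_bool (c : bool -> T) : cs bool c = c true + c false.
Proof. case: Hc => _ _ h _; apply: h => // -[]; auto. Qed.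

Lemma cs_single (I : Type) (a : I -> T) (i0 : I) :
  (forall i, i <> i0 -> a i = 0) -> cs I a = a i0.
Proof.
move=> h.
pose f i := if excluded_middle_informative (i = i0) then true else false.
rewrite (cs_part f) cs_bool.
have fi0 : f i0 = true by rewrite /f; case: excluded_middle_informative.
have -> : cs {i : I | f i = false} (fun i => a (proj1_sig i)) = 0.
  apply: cs_zero => -[i /= p]; apply: h => ei; move: p; rewrite /f.
  by case: excluded_middle_informative.
rewrite addr0.
case: Hc => _ hs _ _.
rewrite (hs _ _ (exist _ i0 fi0)) //= => -[i p].
have ei : i = i0 by move: p; rewrite /f; case: excluded_middle_informative.
subst i; f_equal; apply: proof_irrelevance.
Qed.

Lemma cs_fiber (I J : Type) (f : I -> J) (a : I -> T) (b : J -> T) :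
  (forall j, (exists i0, [/\ f i0 = j, a i0 = b j & forall i, f i = j -> i <> i0 -> a i = 0])
        \/ (b j = 0 /\ forall i, f i = j -> a i = 0)) ->
  cs I a = cs J b.
Proof.
move=> h; rewrite (cs_part f); apply: cs_ext => j.
case: (h j) => [[i0 [fi0 ai0 oth]] | [bj0 oth]].
- rewrite (cs_single (i0 := exist _ i0 fi0)) //= => -[i p] ne.
  apply: (oth i p) => ei; apply: ne; move: p; rewrite ei => p.
  f_equal; apply: proof_irrelevance.
- by rewrite bj0; apply: cs_zero => -[i p]; apply: oth.
Qed.

Lemma cs_bij (I J : Type) (f : I -> J) (g : J -> I) (a : I -> T) :
  (forall i, g (f i) = i) -> (forall j, f (g j) = j) -> cs I a = cs J (fun j => a (g j)).
Proof.
move=> gf fg; apply: (cs_fiber (f := f)) => j; left; exists (g j); split => //.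
by move=> i <- ne; case: ne; rewrite gf.
Qed.

Lemma cs_fubini (A B : Type) (a : A * B -> T) :
  cs (A * B) a = cs A (fun x => cs B (fun y => a (x, y))).
Proof.
rewrite (cs_part fst); apply: cs_ext => x; symmetry.
apply: (cs_fiber (f := fun y => exist (fun p : A * B => p.1 = x) (x, y) erefl)).
move=> [[x' y] /= p]; subst x'; left; exists y; split => //=.
by move=> y' [->].
Qed.

Lemma cs_exchange (A B : Type) (a : A -> B -> T) :
  cs A (fun x => cs B (fun y => a x y)) = cs B (fun y => cs A (fun x => a x y)).
Proof.
rewrite -(cs_fubini (fun p => a p.1 p.2)) -(cs_fubini (fun p => a p.2 p.1)).
by apply: (cs_bij (f := fun p => (p.2, p.1)) (g := fun p => (p.2, p.1))) => -[].
Qed.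

Lemma cs_add (I : Type) (a b : I -> T) : cs I (fun i => a i + b i) = cs I a + cs I b.
Proof.
pose c (i : I) (x : bool) := if x then a i else b i.
have -> : (fun i => a i + b i) = (fun i => cs bool (c i)).
  by apply: functional_extensionality => i; rewrite cs_bool.
by rewrite cs_exchange cs_bool.
Qed.

Lemma cs_sum (I J : Type) (r : seq J) (P : pred J) (F : I -> J -> T) :
  cs I (fun i => \sum_(j <- r | P j) F i j) = \sum_(j <- r | P j) cs I (fun i => F i j).
Proof.
elim: r => [|x r IH].
  by rewrite big_nil; apply: cs_zero => i; rewrite big_nil.
rewrite big_cons -IH; case Px: (P x).
- by rewrite -cs_add; apply: cs_ext => i; rewrite big_cons Px.
- by apply: cs_ext => i; rewrite big_cons Px.
Qed.

Lemma cs_option (X : Type) (b : option X -> T) :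
  cs (option X) b = b None + cs X (fun x => b (Some x)).
Proof.
pose f (o : option X) := if o is Some _ then true else false.
rewrite (cs_part f) cs_bool addrC; congr (_ + _).
- rewrite (cs_single (i0 := exist (fun o => f o = false) None erefl)) //= => -[[x|] p] //= ne.
  by case: ne; f_equal; apply: proof_irrelevance.
- symmetry; apply: (cs_fiber (f := fun x => exist (fun o => f o = true) (Some x) erefl)).
  move=> [[x|] p] //=; left; exists x; split => //=.
  + by f_equal; apply: proof_irrelevance.
  + by move=> x' [->].
Qed.

Lemma cs_ord (k : nat) (a : 'I_k -> T) : cs 'I_k a = \sum_(i < k) a i.
Proof.
elim: k a => [|k IH] a.
  by rewrite big_ord0; case: Hc => h _ _ _; apply: h => -[].
rewrite big_ord_recr /= addrC.
rewrite (cs_fiber (f := unlift ord_max) (b := fun o => if o is Some j then a (lift ord_max j) else a ord_max)).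
  rewrite cs_option IH; congr (_ + _); apply: eq_bigr => i _; congr (a _).
  by apply: val_inj; rewrite /= /bump leqNgt ltn_ord.
move=> [j|]; left.
- exists (lift ord_max j); split => //; first by rewrite liftK.
  by move=> i; case: unliftP => // j' -> [<-].
- exists ord_max; split => //; first by rewrite unlift_none.
  by move=> i; case: unliftP => // ->.
Qed.

End Generic.

Section PDA.
Variables (S : pzSemiRingType) (V : lSemiModType S).
Variables (csS : forall I : Type, (I -> S) -> S) (csV : forall I : Type, (I -> V) -> V).
Variable ip : (nat -> S) -> V.
Arguments csS : clear implicits.
Arguments csV : clear implicits.
Hypothesis Hpair : complete_pair_axioms csS csV ip.
Variables (n : nat) (Gamma : finType) (M : seq Gamma -> seq Gamma -> 'M[S]_n).
Hypothesis HM : pushdown_matrix M.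

Lemma HcS : complete_monoid_axioms csS.
Proof. by case: Hpair => [[]]. Qed.
Lemma HcV : complete_monoid_axioms csV.
Proof. by case: Hpair => _ []. Qed.
Lemma csS_mull (I : Type) (a : I -> S) c : csS I (fun i => c * a i) = c * csS I a.
Proof. by case: Hpair => [[_ h _]]. Qed.
Lemma csS_mulr (I : Type) (a : I -> S) c : csS I (fun i => a i * c) = csS I a * c.
Proof. by case: Hpair => [[_ _ h]]. Qed.
Lemma csV_scalel (I : Type) (a : I -> S) (v : V) : csS I a *: v = csV I (fun i => a i *: v).
Proof. by case: Hpair => _ [_ h _]. Qed.
Lemma csV_scaler (I : Type) (v : I -> V) (s : S) : s *: csV I v = csV I (fun i => s *: v i).
Proof. by case: Hpair => _ [_ _ h]. Qed.
Lemma ip_step (s : nat -> S) : ip s = s 0%N *: ip (fun j => s j.+1).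
Proof. by case: Hpair. Qed.

Lemma HzS (I : Type) : csS I (fun _ => 0) = 0.
Proof.
have -> : (fun _ : I => (0 : S)) = (fun _ => 0 * 0) by apply: functional_extensionality => _; rewrite mul0r.
by rewrite csS_mull mul0r.
Qed.
Lemma HzV (I : Type) : csV I (fun _ => 0) = 0.
Proof.
have -> : (fun _ : I => (0 : V)) = (fun _ => 0 *: 0) by apply: functional_extensionality => _; rewrite scale0r.
by rewrite -csV_scaler scale0r.
Qed.

Local Notation msum := (msum csS).

Lemma msum_ext (I : Type) (A B : I -> 'M[S]_n) : (forall i, A i = B i) -> msum A = msum B.
Proof. by move=> h; rewrite (functional_extensionality _ _ h). Qed.

Lemma msum_fiber (I J : Type) (f : I -> J) (A : I -> 'M[S]_n) (B : J -> 'M[S]_n) :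
  (forall j, (exists i0, [/\ f i0 = j, A i0 = B j & forall i, f i = j -> i <> i0 -> A i = 0])
        \/ (B j = 0 /\ forall i, f i = j -> A i = 0)) ->
  msum A = msum B.
Proof.
move=> h; apply/matrixP => r c; rewrite !mxE.
apply: (cs_fiber HcS HzS (f := f)) => j; case: (h j) => [[i0 [fi e o]]|[e o]].
- left; exists i0; split => //; first by rewrite e.
  by move=> i fij ne; rewrite o // mxE.
- right; split; first by rewrite e mxE.
  by move=> i fij; rewrite o // mxE.
Qed.

Lemma msum_single (I : Type) (A : I -> 'M[S]_n) i0 :
  (forall i, i <> i0 -> A i = 0) -> msum A = A i0.
Proof.
move=> h; apply/matrixP => r c; rewrite !mxE.
by rewrite (cs_single HcS HzS (i0 := i0)) // => i ne; rewrite h // mxE.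
Qed.

Lemma msum_zero (I : Type) (A : I -> 'M[S]_n) : (forall i, A i = 0) -> msum A = 0.
Proof.
move=> h; apply/matrixP => r c; rewrite !mxE.
by apply: (cs_zero HzS) => i; rewrite h mxE.
Qed.

Lemma msum_mull (I : Type) (B : 'M[S]_n) (A : I -> 'M[S]_n) :
  msum (fun k => B *m A k) = B *m msum A.
Proof.
apply/matrixP => r c; rewrite !mxE.
under (cs_ext csS) => k do rewrite mxE.
rewrite (cs_sum HcS HzS); apply: eq_bigr => j _.
by rewrite csS_mull mxE.
Qed.

Lemma msum_mulr (I : Type) (B : 'M[S]_n) (A : I -> 'M[S]_n) :
  msum (fun k => A k *m B) = msum A *m B.
Proof.
apply/matrixP => r c; rewrite !mxE.
under (cs_ext csS) => k do rewrite mxE.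
rewrite (cs_sum HcS HzS); apply: eq_bigr => j _.
by rewrite csS_mulr mxE.
Qed.

Lemma msum_exchange (I J : Type) (A : I -> J -> 'M[S]_n) :
  msum (fun i => msum (fun j => A i j)) = msum (fun j => msum (fun i => A i j)).
Proof.
apply/matrixP => r c; rewrite !mxE.
under (cs_ext csS) => k do rewrite mxE.
rewrite (cs_exchange HcS HzS).
by apply: (cs_ext csS) => j; rewrite mxE.
Qed.

Lemma msum_fubini (I J : Type) (A : I * J -> 'M[S]_n) :
  msum A = msum (fun i => msum (fun j => A (i, j))).
Proof.
apply/matrixP => r c; rewrite !mxE.
rewrite (cs_fubini HcS HzS).
by apply: (cs_ext csS) => j; rewrite mxE.
Qed.

Lemma msum_shift (A : nat -> 'M[S]_n) : A 0%N = 0 -> msum A = msum (fun m => A m.+1).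
Proof.
move=> h0; symmetry; apply: (msum_fiber (f := succn)) => -[|m].
- by right; split.
- by left; exists m; split => // i [->].
Qed.


Lemma M_nil (s : seq Gamma) : M [::] s = 0.
Proof. by case: HM => _ ->. Qed.

Lemma M_cons (q : Gamma) (a s : seq Gamma) :
  M (q :: a) s = if suffix a s then M [:: q] (take (size s - size a) s) else 0.
Proof. by case: HM => _ ->. Qed.

Lemma cat_injr (u v r : seq Gamma) : u ++ r = v ++ r -> u = v.
Proof.
move=> e; have hs : size u = size v.
  by move/(congr1 size): e; rewrite !size_cat => /addIn.
by rewrite -(take_size_cat r (erefl (size u))) e take_size_cat.
Qed.

Lemma M_lift (a b r : seq Gamma) : a != [::] -> M (a ++ r) (b ++ r) = M a b.
Proof.
case: a => [//|q a] _; rewrite cat_cons (M_cons q (a ++ r)) (M_cons q a) suffix_catl // eqxx /=.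
case: ifP => // _; rewrite !size_cat subnDr takel_cat // leq_subr //.
Qed.

Lemma M_nosuf (a r s : seq Gamma) : a != [::] -> M (a ++ r) s != 0 -> exists u, s = u ++ r.
Proof.
case: a => [//|q a] _; rewrite cat_cons M_cons.
case: suffixP => [[u ->] _|]; last by rewrite eqxx.
by exists (u ++ a); rewrite catA.
Qed.

Lemma M_suf0 (q : Gamma) (a s : seq Gamma) : ~~ suffix a s -> M (q :: a) s = 0.
Proof. by move=> h; rewrite M_cons (negbTE h). Qed.

Lemma msum_suffix (r : seq Gamma) (F : seq Gamma -> 'M[S]_n) :
  (forall s, ~~ suffix r s -> F s = 0) -> msum F = msum (fun u => F (u ++ r)).
Proof.
move=> h; symmetry; apply: (msum_fiber (f := fun u => u ++ r)) => s.
case: (boolP (suffix r s)) => [/suffixP [u ->]|ns].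
- by left; exists u; split => // v /cat_injr.
- right; split; first exact: h.
  by move=> u e; move: ns; rewrite -e suffix_suffix.
Qed.

Local Notation Mpow := (Mpow csS M).
Local Notation Mstar := (Mstar csS M).

Lemma Mpow1 (p p' : seq Gamma) : Mpow 1 p p' = M p p'.
Proof.
rewrite /= (msum_single (i0 := p)) /Mid ?eqxx ?mul1mx // => s ne.
by rewrite (negbTE (introN eqP (nesym ne))) mul0mx.
Qed.

Lemma Mpow_Sl m (p p' : seq Gamma) :
  Mpow m.+1 p p' = msum (fun s => M p s *m Mpow m s p').
Proof.
elim: m p' => [|m IH] p'.
  rewrite Mpow1 (msum_single (i0 := p')) /= /Mid ?eqxx ?mulmx1 // => s ne.
  by rewrite (negbTE (introN eqP ne)) mulmx0.
change (msum (fun s => Mpow m.+1 p s *m M s p') = msum (fun s => M p s *m Mpow m.+1 s p')).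
under msum_ext => s do rewrite IH -msum_mulr.
rewrite msum_exchange; apply: msum_ext => t.
by rewrite -msum_mull; apply: msum_ext => s; rewrite mulmxA.
Qed.

Lemma Mpow_nil m (p' : seq Gamma) : Mpow m.+1 [::] p' = 0.
Proof. by rewrite Mpow_Sl; apply: msum_zero => s; rewrite M_nil mul0mx. Qed.

Lemma Mpow0_cons (q : Gamma) w : Mpow 0 (q :: w) [::] = 0.
Proof. by []. Qed.

Lemma Mpow_cat_nil (r : seq Gamma) m :
  msum (fun ab : nat * nat => if (ab.1 + ab.2 == m)%N then Mpow ab.1 [::] [::] *m Mpow ab.2 r [::] else 0)
  = Mpow m r [::].
Proof.
rewrite (msum_single (i0 := (0%N, m))) /= ?eqxx ?mul1mx // => -[[|a] b] ne.
- by case: eqP => // e; case: ne; rewrite -e.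
- by rewrite [Mpow _ [::] _]Mpow_nil mul0mx; case: ifP.
Qed.

Lemma if_mull (c : bool) (A B : 'M[S]_n) : A *m (if c then B else 0) = if c then A *m B else 0.
Proof. by case: c; rewrite ?mulmx0. Qed.
Lemma if_mulr (c : bool) (A B : 'M[S]_n) : (if c then B else 0) *m A = if c then B *m A else 0.
Proof. by case: c; rewrite ?mul0mx. Qed.

Lemma Mpow_cat (r : seq Gamma) m w :
  Mpow m (w ++ r) [::] =
  msum (fun ab : nat * nat => if (ab.1 + ab.2 == m)%N then Mpow ab.1 w [::] *m Mpow ab.2 r [::] else 0).
Proof.
elim: m w => [|m IH] [|q w].
- by rewrite cat0s Mpow_cat_nil.
- symmetry; apply: msum_zero => -[[|a] b] /=; first by rewrite mul0mx; case: ifP.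
  done.
- by rewrite cat0s Mpow_cat_nil.
pose N := msum (fun u => msum (fun ab : nat * nat => if (ab.1 + ab.2 == m)%N
            then M [:: q] u *m (Mpow ab.1 (u ++ w) [::] *m Mpow ab.2 r [::]) else 0)).
transitivity N.
  rewrite cat_cons Mpow_Sl (msum_suffix (r := w ++ r)); last first.
    by move=> s ns; rewrite M_suf0 // mul0mx.
  apply: msum_ext => u.
  rewrite -[q :: (w ++ r)]/([:: q] ++ (w ++ r)) M_lift // catA IH -msum_mull.
  by apply: msum_ext => ab; rewrite if_mull.
transitivity (msum (fun ab : nat * nat => if (ab.1 + ab.2 == m)%N
               then Mpow ab.1.+1 (q :: w) [::] *m Mpow ab.2 r [::] else 0)).
  rewrite /N msum_exchange; apply: msum_ext => -[a b].
  case: ifP => _; last by apply: msum_zero.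
  rewrite Mpow_Sl (msum_suffix (r := w) (F := fun s => M (q :: w) s *m Mpow a s [::])); last first.
    by move=> s ns; rewrite M_suf0 // mul0mx.
  rewrite -msum_mulr; apply: msum_ext => u.
  by rewrite -[q :: w]/([:: q] ++ w) M_lift // mulmxA.
apply: (msum_fiber (f := fun ab : nat * nat => (ab.1.+1, ab.2))) => -[[|a] b].
- right; split; first by rewrite /Mid /= mul0mx; case: ifP.
  by move=> -[a' b'] [].
- left; exists (a, b); split => //.
  by move=> [a' b'] [-> ->].
Qed.

Lemma Mstar_cat (w r : seq Gamma) : Mstar (w ++ r) [::] = Mstar w [::] *m Mstar r [::].
Proof.
rewrite /Mstar.
under msum_ext => m do rewrite Mpow_cat.
rewrite msum_exchange.
transitivity (msum (fun ab : nat * nat => Mpow ab.1 w [::] *m Mpow ab.2 r [::])).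
  apply: msum_ext => -[a b] /=; rewrite (msum_single (i0 := (a + b)%N)) ?eqxx //.
  by move=> m ne; case: eqP => // e; case: ne.
rewrite msum_fubini -msum_mulr; apply: msum_ext => a.
by rewrite -msum_mull.
Qed.

Lemma Mstar_nil : Mstar [::] [::] = 1%:M.
Proof.
rewrite /Mstar (msum_single (i0 := 0%N)) // => -[//|m] _.
by rewrite Mpow_nil.
Qed.

Lemma xword_Mstar (w : seq Gamma) :
  xword (fun p => Mstar [:: p] [::]) w = Mstar w [::].
Proof.
elim: w => [|q w IH] /=; first by rewrite Mstar_nil.
by rewrite IH -Mstar_cat.
Qed.

Lemma x_eq (p : Gamma) :
  Mstar [:: p] [::] = msum (fun s => M [:: p] s *m xword (fun p => Mstar [:: p] [::]) s).
Proof.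
rewrite /Mstar (msum_shift) //.
under msum_ext => m do rewrite Mpow_Sl.
rewrite msum_exchange; apply: msum_ext => s.
by rewrite xword_Mstar msum_mull.
Qed.


Variable l : nat.

Definition scons (X : Type) (x : X) (f : nat -> X) : nat -> X :=
  fun t => if t is t'.+1 then f t' else x.

Lemma sig_eq (A : Type) (P : A -> Prop) (x y : {a | P a}) : sval x = sval y -> x = y.
Proof. case: x => a pa; case: y => b pb /= e; subst b; f_equal; apply: proof_irrelevance. Qed.

Definition W (p : seq Gamma) (i : 'I_n) (ps : nat -> seq Gamma) (js : nat -> 'I_n) : nat -> S :=
  fun t => M (if t is t'.+1 then ps t' else p) (ps t) (if t is t'.+1 then js t' else i) (js t).

Definition Om (p : seq Gamma) (i : 'I_n) (ps : nat -> seq Gamma) : V :=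
  csV {js : nat -> 'I_n | in_Pl l js} (fun js => ip (W p i ps (proj1_sig js))).

Local Notation Momega := (Momega csV ip M l).

Lemma Momega_Om p i : Momega p i = csV (nat -> seq Gamma) (fun ps => Om p i ps).
Proof. by []. Qed.

Lemma ip_zero (s : nat -> S) t : s t = 0 -> ip s = 0.
Proof.
elim: t s => [|t IH] s h; rewrite ip_step; first by rewrite h scale0r.
by rewrite (IH (fun j => s j.+1)) ?scaler0.
Qed.

Lemma Om_invalid p i ps t : M (if t is t'.+1 then ps t' else p) (ps t) = 0 -> Om p i ps = 0.
Proof.
move=> h; apply: (cs_zero HzV) => js; apply: (ip_zero (t := t)).
by rewrite /W h mxE.
Qed.

Lemma inPl_shift (js : nat -> 'I_n) : in_Pl l js -> in_Pl l (fun t => js t.+1).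
Proof.
move=> h N; case: (h N.+1) => -[|t] // lt1 lt2.
by exists t.
Qed.

Lemma inPl_scons (j : 'I_n) (js : nat -> 'I_n) : in_Pl l js -> in_Pl l (scons j js).
Proof.
move=> h N; case: (h N) => t lt1 lt2.
by exists t.+1 => //; apply: leqW.
Qed.

Lemma Om_step p i s ps : Om p i (scons s ps) = \sum_(j < n) M p s i j *: Om s j ps.
Proof.
rewrite /Om.
transitivity (csV {js | in_Pl l js} (fun js => M p s i (sval js 0%N) *:
                 ip (W s (sval js 0%N) ps (fun t => sval js t.+1)))).
  apply: (cs_ext csV) => -[js h] /=; rewrite ip_step; congr (_ *: ip _).
  by apply: functional_extensionality => -[|t].
rewrite (cs_fiber HcV HzV
  (f := fun js : {js | in_Pl l js} =>
          (sval js 0%N, exist (in_Pl l) (fun t => sval js t.+1) (inPl_shift (svalP js))))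
  (b := fun pr : 'I_n * {js | in_Pl l js} => M p s i pr.1 *: ip (W s pr.1 ps (sval pr.2)))).
  rewrite (cs_fubini HcV HzV) (cs_ord HcV HzV).
  apply: eq_bigr => j _ /=; rewrite csV_scaler; apply: (cs_ext csV) => js //.
move=> [j [js h]]; left.
exists (exist _ (scons j js) (inPl_scons j h)); split => //=.
  by f_equal; apply: sig_eq.
move=> [js' h'] /= [e1 e2] ne; case: ne; apply: sig_eq => /=.
apply: functional_extensionality => -[|t] //=.
by move/(congr1 (fun f => f t)): e2.
Qed.

Lemma cs_scons (X : Type) (F : (nat -> X) -> V) :
  csV (nat -> X) F = csV X (fun x => csV (nat -> X) (fun f => F (scons x f))).
Proof.
rewrite (cs_bij HcV HzV (f := fun g : nat -> X => (g 0%N, fun t => g t.+1))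
                (g := fun pr : X * (nat -> X) => scons pr.1 pr.2)).
- by rewrite (cs_fubini HcV HzV).
- by move=> g; apply: functional_extensionality => -[|t].
- by move=> [x g].
Qed.

Lemma Momega_step p i : Momega p i = csV (seq Gamma) (fun s => mact (M p s) (Momega s) i).
Proof.
rewrite Momega_Om cs_scons; apply: (cs_ext csV) => s.
under (cs_ext csV) => ps do rewrite Om_step.
rewrite (cs_sum HcV HzV) /mact; apply: eq_bigr => j _.
by rewrite csV_scaler.
Qed.

Lemma Momega_nil i : Momega [::] i = 0.
Proof.
rewrite Momega_Om; apply: (cs_zero HzV) => ps.
by apply: (@Om_invalid [::] i ps 0%N); rewrite M_nil.
Qed.


Definition fh (r : seq Gamma) (ps : nat -> seq Gamma) : option nat :=
  match excluded_middle_informative (exists t, ps t == r) with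
  | left H => Some (ex_minn H)
  | right _ => None
  end.

Lemma fh_NoneP r ps : fh r ps = None <-> (forall t, ps t != r).
Proof.
rewrite /fh; case: excluded_middle_informative => [H|H]; split => //.
- by case: H => t ht h; move: (h t); rewrite ht.
- by move=> _ t; apply/negP => ht; apply: H; exists t.
Qed.

Lemma fh_SomeP r ps T : fh r ps = Some T <-> (ps T == r) /\ (forall t, (t < T)%N -> ps t != r).
Proof.
rewrite /fh; case: excluded_middle_informative => [H|H]; last first.
  by split => // -[h _]; case: H; exists T.
case: ex_minnP => m Pm minm; split.
- case=> <-; split => // t lt; apply/negP => ht.
  by move: (minm t ht); rewrite leqNgt lt.
- case=> h1 h2; congr Some; apply/eqP; rewrite eqn_leq minm //=.
  by rewrite leqNgt; apply/negP => lt; move: (h2 m lt); rewrite Pm.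
Qed.

Lemma fh_scons r s ps :
  fh r (scons s ps) = if s == r then Some 0%N else omap succn (fh r ps).
Proof.
case: eqP => [->|ne].
  by apply/fh_SomeP; split => //=.
case E: (fh r ps) => [T|] /=.
- move/fh_SomeP: E => [h1 h2]; apply/fh_SomeP; split => //= -[|t] //= lt.
  + by apply/eqP.
  + exact: h2.
- move/fh_NoneP: E => h; apply/fh_NoneP => -[|t] //=.
  by apply/eqP.
Qed.

Definition Hs r T p i : V :=
  csV (nat -> seq Gamma) (fun ps => if fh r ps == Some T then Om p i ps else 0).

Fixpoint G (r : seq Gamma) (T : nat) (p : seq Gamma) : 'M[S]_n :=
  if T is T'.+1 then msum (fun s => if s == r then 0 else M p s *m G r T' s) else M p r.

Lemma mact_ext (A : 'M[S]_n) (v w : 'I_n -> V) : (forall i, v i = w i) -> mact A v = mact A w.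
Proof. by move=> h; rewrite (functional_extensionality _ _ h). Qed.

Lemma mact_mul (A B : 'M[S]_n) (v : 'I_n -> V) i : mact (A *m B) v i = mact A (mact B v) i.
Proof.
rewrite /mact.
under eq_bigr => j _ do rewrite mxE scaler_suml.
rewrite exchange_big; apply: eq_bigr => k _.
by rewrite scaler_sumr; apply: eq_bigr => j _; rewrite scalerA.
Qed.

Lemma mact0 (v : 'I_n -> V) i : mact 0 v i = 0.
Proof. by rewrite /mact big1 // => j _; rewrite mxE scale0r. Qed.

Lemma mact1 (v : 'I_n -> V) i : mact 1%:M v i = v i.
Proof.
rewrite /mact (bigD1 i) //= mxE eqxx scale1r big1 ?addr0 // => j ne.
by rewrite mxE eq_sym (negbTE ne) scale0r.
Qed.

Lemma mact_msum (I : Type) (A : I -> 'M[S]_n) (v : 'I_n -> V) i :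
  mact (msum A) v i = csV I (fun k => mact (A k) v i).
Proof.
rewrite /mact (cs_sum HcV HzV); apply: eq_bigr => j _.
by rewrite mxE csV_scalel.
Qed.

Lemma mact_sum (A : 'M[S]_n) k (v : 'I_k -> 'I_n -> V) i :
  mact A (fun i' => \sum_(j < k) v j i') i = \sum_(j < k) mact A (v j) i.
Proof.
rewrite /mact; under eq_bigr => j _ do rewrite scaler_sumr.
by rewrite exchange_big.
Qed.

Lemma Hs_G r T p i : Hs r T p i = mact (G r T p) (Momega r) i.
Proof.
elim: T p i => [|T IH] p i.
  rewrite /Hs cs_scons.
  under (cs_ext csV) => s do under (cs_ext csV) => ps do rewrite fh_scons Om_step.
  rewrite (cs_single HcV HzV (i0 := r)); last first.
    move=> s ne; apply: (cs_zero HzV) => ps.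
    by rewrite (negbTE (introN eqP ne)); case: (fh r ps).
  under (cs_ext csV) => ps do rewrite eqxx /=.
  rewrite (cs_sum HcV HzV) /mact; apply: eq_bigr => j _.
  by rewrite csV_scaler.
rewrite /Hs cs_scons.
under (cs_ext csV) => s do under (cs_ext csV) => ps do rewrite fh_scons Om_step.
rewrite /= mact_msum; apply: (cs_ext csV) => s.
case: eqP => [_|ne] /=.
  by rewrite mact0; apply: (cs_zero HzV).
rewrite mact_mul (@mact_ext _ (mact (G r T s) (Momega r)) (Hs r T s)); last by move=> j; rewrite IH.
rewrite /Hs /mact.
under eq_bigr => j _ do rewrite csV_scaler.
rewrite -(cs_sum HcV HzV); apply: (cs_ext csV) => ps.
case: (fh r ps) => [T'|] /=; last by rewrite big1 // => j _; rewrite scaler0.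
have -> : (Some T'.+1 == Some T.+1) = (Some T' == Some T) by [].
by case: ifP => _ //; rewrite big1 // => j _; rewrite scaler0.
Qed.

Lemma cat_neq (c : Gamma) (u r : seq Gamma) : (c :: u) ++ r != r.
Proof.
apply/eqP => /(congr1 size); rewrite /= size_cat => /eqP.
by rewrite -addSn -{2}[size r]add0n eqn_add2r.
Qed.

Lemma G_Mpow r T u : u != [::] -> G r T (u ++ r) = Mpow T.+1 u [::].
Proof.
elim: T u => [|T IH] u hu.
  by rewrite Mpow1 /= -{2}[r]cat0s M_lift.
change (msum (fun s => if s == r then 0 else M (u ++ r) s *m G r T s) = Mpow T.+2 u [::]).
rewrite (msum_suffix (r := r)); last first.
  move=> s ns; case: eqP => // _.
  case: (boolP (M (u ++ r) s == 0)) => [/eqP -> |nz]; first by rewrite mul0mx.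
  by case: (M_nosuf hu nz) => v e; move: ns; rewrite e suffix_suffix.
rewrite [RHS]Mpow_Sl; apply: msum_ext => -[|c t].
  by rewrite cat0s eqxx Mpow_nil mulmx0.
by rewrite (negbTE (cat_neq _ _ _)) M_lift // IH.
Qed.


Definition lift_ps (r : seq Gamma) (ps : nat -> seq Gamma) : nat -> seq Gamma :=
  fun t => ps t ++ r.
Definition unlift_ps (r : seq Gamma) (ps : nat -> seq Gamma) : nat -> seq Gamma :=
  fun t => take (size (ps t) - size r) (ps t).

Lemma valid_lift (q : Gamma) r (ps : nat -> seq Gamma) :
  (forall t, ps t != r) ->
  (forall t, M (if t is t'.+1 then ps t' else q :: r) (ps t) != 0) ->
  forall t, exists u, u != [::] /\ ps t = u ++ r.
Proof.
move=> hn hv; elim=> [|t [u [hu e]]].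
- have := hv 0%N; rewrite -[q :: r]/([:: q] ++ r) => /(M_nosuf (isT : [:: q] != [::])) [u e].
  exists u; split => //; apply/eqP => u0; move: (hn 0%N); rewrite e u0 cat0s eqxx.
  by [].
- have := hv t.+1; rewrite /= e => /(M_nosuf hu) [v e'].
  exists v; split => //; apply/eqP => v0; move: (hn t.+1); rewrite e' v0 cat0s eqxx.
  by [].
Qed.

Lemma Nn_lift (q : Gamma) r i :
  csV (nat -> seq Gamma) (fun ps => if fh r ps == None then Om (q :: r) i ps else 0)
  = Momega [:: q] i.
Proof.
rewrite Momega_Om; apply: (cs_fiber HcV HzV (f := unlift_ps r)) => ps; left.
exists (lift_ps r ps); split.
- apply: functional_extensionality => t.
  by rewrite /unlift_ps /lift_ps size_cat addnK take_size_cat.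
- case: (classic (exists t, ps t = [::])) => [[t ht]|hn].
  + have -> : fh r (lift_ps r ps) == None = false.
      apply/negbTE/eqP => /fh_NoneP /(_ t); rewrite /lift_ps ht cat0s eqxx.
      by [].
    by symmetry; apply: (@Om_invalid [:: q] i ps t.+1); rewrite /= ht M_nil.
  + have hne : forall t, ps t != [::].
      by move=> t; apply/eqP => e; apply: hn; exists t.
    have -> : fh r (lift_ps r ps) == None.
      apply/eqP/fh_NoneP => t; rewrite /lift_ps.
      by case E: (ps t) (hne t) => [|c u] // _; apply: cat_neq.
    rewrite /Om; apply: (cs_ext csV) => js; congr (ip _).
    apply: functional_extensionality => -[|t]; rewrite /W /lift_ps.
    * by rewrite -[q :: r]/([:: q] ++ r) M_lift.
    * by rewrite M_lift.
- move=> ps' e ne.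
  case: eqP => // /fh_NoneP hn.
  case: (classic (exists t, M (if t is t'.+1 then ps' t' else q :: r) (ps' t) = 0)) => [[t ht]|hv].
    exact: (@Om_invalid (q :: r) i ps' t ht).
  case: ne; rewrite -e; apply: functional_extensionality => t.
  have hv' : forall t, M (if t is t'.+1 then ps' t' else q :: r) (ps' t) != 0.
    by move=> t'; apply/eqP => h; apply: hv; exists t'.
  rewrite /lift_ps /unlift_ps.
  case: (valid_lift hn hv' t) => u [_ ->].
  by rewrite size_cat addnK take_size_cat.
Qed.

Lemma Momega_cons (q : Gamma) r i :
  Momega (q :: r) i = Momega [:: q] i + mact (Mstar [:: q] [::]) (Momega r) i.
Proof.
rewrite Momega_Om.
transitivity (csV (nat -> seq Gamma) (fun ps =>
   (if fh r ps == None then Om (q :: r) i ps else 0) +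
   (if fh r ps == None then 0 else Om (q :: r) i ps))).
  by apply: (cs_ext csV) => ps; case: ifP; rewrite ?addr0 ?add0r.
rewrite (cs_add HcV HzV) Nn_lift; congr (_ + _).
transitivity (csV nat (fun T => Hs r T (q :: r) i)).
  rewrite /Hs (cs_exchange HcV HzV); apply: (cs_ext csV) => ps.
  case E: (fh r ps) => [T0|] /=.
  - rewrite (cs_single HcV HzV (i0 := T0)) ?eqxx // => T ne.
    by case: eqP => // -[e]; case: ne.
  - by symmetry; apply: (cs_zero HzV).
under (cs_ext csV) => T do rewrite Hs_G -[q :: r]/([:: q] ++ r) G_Mpow //.
by rewrite -mact_msum /Mstar [in RHS](msum_shift).
Qed.

Lemma Momega_word (p0 : Gamma) (w : seq Gamma) i :
  Momega w i = \sum_(j < size w) mact (xword (fun p => Mstar [:: p] [::]) (take j w))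
                                    (Momega [:: nth p0 w j]) i.
Proof.
elim: w i => [|q w IH] i; first by rewrite big_ord0 Momega_nil.
rewrite Momega_cons big_ord_recl /= mact1; congr (_ + _).
rewrite (@mact_ext _ (Momega w) _ IH) mact_sum; apply: eq_bigr => j _.
by rewrite mact_mul.
Qed.

Lemma z_eq (p0 p : Gamma) i :
  Momega [:: p] i =
  csV {w : seq Gamma | (0 < size w)%N} (fun w =>
    mact (M [:: p] (proj1_sig w))
      (fun i' => \sum_(j < size (proj1_sig w))
                   mact (xword (fun p => Mstar [:: p] [::]) (take j (proj1_sig w)))
                        (Momega [:: nth p0 (proj1_sig w) j]) i') i).
Proof.
rewrite Momega_step; symmetry.
apply: (cs_fiber HcV HzV (f := fun w : {w : seq Gamma | (0 < size w)%N} => sval w)) => -[|q w].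
- right; split.
    by rewrite /mact big1 // => j _; rewrite Momega_nil scaler0.
  by move=> [w' h] /= e; move: h; rewrite e.
- left; exists (exist _ (q :: w) isT); split => //=.
  + by congr (mact _ _ _); apply: functional_extensionality => i'; rewrite (Momega_word p0).
  + by move=> [w' h] /= e ne; case: ne; apply: sig_eq.
Qed.

End PDA.

Unset Implicit Arguments.

Theorem theorem11
  (S : pzSemiRingType) (V : lSemiModType S)
  (csS : forall I : Type, (I -> S) -> S) (csV : forall I : Type, (I -> V) -> V)
  (ip : (nat -> S) -> V)
  (Hpair : complete_pair_axioms csS csV ip)
  (S' : S -> Prop) (HS'0 : S' 0) (HS'1 : S' 1)
  (n : nat) (Gamma : finType)
  (I : 'rV[S]_n) (M : seq Gamma -> seq Gamma -> 'M[S]_n) (P : 'cV[S]_n)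
  (p0 : Gamma) (l : nat)
  (HP : is_omega_pda S' I M P p0 l) :
  let x : Gamma -> 'M[S]_n := fun p => Mstar csS M [:: p] [::] in
  let z : Gamma -> 'I_n -> V := fun p => Momega csV ip M l [:: p] in
  (forall p : Gamma,
      x p = msum csS (fun pi : seq Gamma => M [:: p] pi *m xword x pi)) /\
  (forall (p : Gamma) (i : 'I_n),
      z p i =
      csV {w : seq Gamma | (0 < size w)%N} (fun w =>
        mact (M [:: p] (proj1_sig w))
          (fun i' => \sum_(j < size (proj1_sig w))
                       mact (xword x (take j (proj1_sig w)))
                            (z (nth p0 (proj1_sig w) j)) i') i)) /\
  behavior csS csV ip M I P p0 l =
    ((I *m x p0 *m P) 0 0, \sum_(j < n) I 0 j *: z p0 j).
Proof.
move=> x z.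
have HM : pushdown_matrix M by case: HP.
split; first by move=> p; exact: (x_eq Hpair HM p).
split; last by [].
by move=> p i; exact: (z_eq Hpair HM l p0 p i).
Qed.
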